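(* Let $D\ge1$, let $Q_D$ be the $D$-dimensional hypercube on $X=\{0,1\}^D$ with adjacency matrix $A$. The matrices $$\alpha^*_iA\alpha^*_j-\alpha^*_jA\alpha^*_i,\qquad 1\le i<j\le D,$$ form a basis for the space of antisymmetric $A$-like matrices of $Q_D$. In particular this space has dimension $\binom{D}{2}$.
   Context: $Q_D$ is the graph with vertex set $X=\{0,1\}^D$ (sequences $x=(x_1,\ldots,x_D)$, $x_i\in\{0,1\}$), two vertices adjacent iff they differ in exactly one coordinate. Matrices are real with rows and columns indexed by $X$. A matrix $B$ is $A$-like if $BA=AB$ and $B_{xy}=0$ for all $x,y\in X$ that are neither equal nor adjacent; $B$ is antisymmetric if $B^t=-B$. For $1\le i\le D$, $\alpha^*_i$ is the diagonal matrix with $(x,x)$-entry $1$ if $x_i=0$ and $-1$ if $x_i=1$. *)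

(* Defs.v *)
From HB Require Import structures.
From mathcomp Require Import all_boot all_order all_algebra.
Set Implicit Arguments. Unset Strict Implicit. Unset Printing Implicit Defensive.
Import Order.TTheory GRing.Theory Num.Theory.
Local Open Scope ring_scope.

(* Vertex set X = {0,1}^D, coordinates indexed by 'I_D (0-based). *)
Definition vert (D : nat) := {ffun 'I_D -> bool}.

Definition mxX (R : nzRingType) (D : nat) := 'M[R]_#|{: vert D}|.

Definition entry (R : nzRingType) (D : nat) (B : mxX R D) (x y : vert D) : R :=
  B (enum_rank x) (enum_rank y).

Definition adj (D : nat) (x y : vert D) : bool := #|[set k | x k != y k]| == 1%N.

Definition adjA (R : nzRingType) (D : nat) : mxX R D :=
  \matrix_(i, j) (if adj (enum_val i : vert D) (enum_val j) then 1 else 0).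

Definition alphaS (R : nzRingType) (D : nat) (i : 'I_D) : mxX R D :=
  \matrix_(a, b) (if a == b then (if (enum_val a : vert D) i then -1 else 1) else 0).

Definition A_like (R : nzRingType) (D : nat) (B : mxX R D) : Prop :=
  B *m adjA R D = adjA R D *m B /\
  forall x y : vert D, x != y -> ~~ adj x y -> entry B x y = 0.

Definition antisym (R : nzRingType) (D : nat) (B : mxX R D) : Prop := B^T = - B.

Definition genM (R : nzRingType) (D : nat) (i j : 'I_D) : mxX R D :=
  alphaS R i *m adjA R D *m alphaS R j - alphaS R j *m adjA R D *m alphaS R i.

Definition pairs_lt (D : nat) : seq ('I_D * 'I_D) :=
  [seq p <- [seq (i, j) : 'I_D * 'I_D | i <- enum 'I_D, j <- enum 'I_D] | (nat_of_ord p.1 < nat_of_ord p.2)%N].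

Definition genList (R : nzRingType) (D : nat) : seq (mxX R D) :=
  [seq genM R p.1 p.2 | p <- pairs_lt D].

(* Main.v *)
Require Import Defs.
From HB Require Import structures.
From mathcomp Require Import all_boot all_order all_algebra.
From mathcomp Require Import ring lra zify.
Import Order.TTheory GRing.Theory Num.Theory.
Local Open Scope ring_scope.

Set Implicit Arguments. Unset Strict Implicit. Unset Printing Implicit Defensive.


Section Basics.
Variable D : nat.
Implicit Types (x y z : vert D) (i j k : 'I_D).

Definition flip x k : vert D := [ffun t => if t == k then ~~ x t else x t].
Definition x0 : vert D := [ffun _ => false].
Definition dset x y := [set t | x t != y t].

Lemma flipE x k t : flip x k t = if t == k then ~~ x t else x t.
Proof. by rewrite ffunE. Qed.

Lemma flipK x k : flip (flip x k) k = x.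
Proof. by apply/ffunP => t; rewrite !flipE; case: eqP => //; rewrite negbK. Qed.

Lemma flipC x k l : flip (flip x k) l = flip (flip x l) k.
Proof. by apply/ffunP => t; rewrite !flipE; case: (t =P k); case: (t =P l) => //. Qed.

Lemma flip_inj x : injective (flip x).
Proof.
move=> k l /ffunP /(_ k); rewrite !flipE eqxx; case: eqP => // _.
by case: (x k).
Qed.

Lemma adjC x y : adj x y = adj y x.
Proof.
rewrite /adj (@eq_card _ _ [set k | y k != x k]) // => t; rewrite !inE.
by rewrite eq_sym.
Qed.

Lemma adj_flip x k : adj x (flip x k).
Proof.
rewrite /adj; apply/cards1P; exists k; apply/setP => t; rewrite !inE flipE.
by case: (t =P k) => _; case: (x t).
Qed.

Lemma adjP x y : adj x y -> exists k, y = flip x k.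
Proof.
rewrite /adj => /cards1P [k Hk]; exists k; apply/ffunP => t.
have := congr1 (fun S : {set 'I_D} => t \in S) Hk; rewrite /= !inE flipE.
by case: (t =P k) => _; case: (x t); case: (y t).
Qed.

Lemma adj_irr x : ~~ adj x x.
Proof.
rewrite /adj; apply/negP => /cards1P [k Hk].
by have := congr1 (fun S : {set 'I_D} => k \in S) Hk; rewrite /= !inE !eqxx.
Qed.

Lemma adj_flipl x y k : adj (flip x k) y = adj x (flip y k).
Proof.
rewrite /adj (@eq_card _ _ [set t | x t != flip y k t]) // => t; rewrite !inE !flipE.
by case: (t =P k) => _ //; case: (x t); case: (y t).
Qed.

Lemma nadj3 x a b c : a != b -> a != c -> b != c ->
  ~~ adj x (flip (flip (flip x a) b) c).
Proof.
move=> ab ac bc; rewrite /adj; apply/negP => /cards1P [m Hm].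
have ba : b != a by rewrite eq_sym.
have ca : c != a by rewrite eq_sym.
have cb : c != b by rewrite eq_sym.
have H t : (t \in [set m]) = [|| t == a, t == b | t == c].
  rewrite -Hm !inE !flipE.
  case: (t =P a) => [->|/eqP ta].
    by rewrite ?eqxx ?(negPf ab) ?(negPf ac) /=; case: (x a).
  case: (t =P b) => [->|/eqP tb].
    by rewrite ?eqxx ?(negPf ba) ?(negPf bc) /=; case: (x b).
  case: (t =P c) => [->|/eqP tc].
    by rewrite ?eqxx ?(negPf ca) ?(negPf cb) /=; case: (x c).
  by rewrite ?(negPf ta) ?(negPf tb) ?(negPf tc) /= eqxx.
have := H a; have := H b; rewrite !inE !eqxx /= orbT => /eqP <- /eqP.
by move/eqP; rewrite ?(negPf ab).
Qed.

End Basics.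


Section Mx.
Variable R : realFieldType.
Variable D : nat.
Implicit Types (x y z : vert D) (i j k : 'I_D) (B C : mxX R D).

Definition sg (b : bool) : R := if b then -1 else 1.

Lemma entry_mul B C x y :
  entry (B *m C) x y = \sum_z entry B x z * entry C z y.
Proof.
rewrite /entry mxE (reindex (@enum_rank (vert D))) //=.
by exists enum_val => t _; rewrite ?enum_rankK ?enum_valK.
Qed.

Lemma entry_adj x y : entry (adjA R D) x y = if adj x y then 1 else 0.
Proof. by rewrite /entry /adjA mxE !enum_rankK. Qed.

Lemma entry_alpha i x y :
  entry (alphaS R i) x y = if x == y then sg (x i) else 0.
Proof.
by rewrite /entry /alphaS mxE !enum_rankK (inj_eq enum_rank_inj).
Qed.

Lemma entry_tr B x y : entry B^T x y = entry B y x.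
Proof. by rewrite /entry mxE. Qed.

Lemma entryN B x y : entry (- B) x y = - entry B x y.
Proof. by rewrite /entry mxE. Qed.

Lemma entryB B C x y : entry (B - C) x y = entry B x y - entry C x y.
Proof. by rewrite /entry !mxE. Qed.

Lemma entryZ (c : R) B x y : entry (c *: B) x y = c * entry B x y.
Proof. by rewrite /entry !mxE. Qed.

Lemma entry_sum (I : Type) (r : seq I) (F : I -> mxX R D) x y :
  entry (\sum_(p <- r) F p) x y = \sum_(p <- r) entry (F p) x y.
Proof. by rewrite /entry summxE. Qed.

Lemma mx_ext B C : (forall x y, entry B x y = entry C x y) -> B = C.
Proof.
move=> H; apply/matrixP => a b; have := H (enum_val a) (enum_val b).
by rewrite /entry !enum_valK.
Qed.

Lemma sum_adj (F : vert D -> R) y :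
  \sum_z (if adj z y then F z else 0) = \sum_k F (flip y k).
Proof.
rewrite -big_mkcond /=.
rewrite (eq_bigl (mem (flip y @: [set: 'I_D]))); last first.
  move=> z /=; apply/idP/imsetP => [Hz | [k _ ->]]; last by rewrite adjC adj_flip.
  by rewrite adjC in Hz; have [k ->] := adjP Hz; exists k; rewrite ?in_setT.
rewrite big_imset /=; last by move=> k l _ _; apply: flip_inj.
by apply: eq_bigl => k; rewrite inE.
Qed.

Lemma BA_entry B x z :
  entry (B *m adjA R D) x z = \sum_k entry B x (flip z k).
Proof.
rewrite entry_mul -sum_adj; apply: eq_bigr => y _.
by rewrite entry_adj; case: adj; rewrite ?mulr1 ?mulr0.
Qed.

Lemma AB_entry B x z :
  entry (adjA R D *m B) x z = \sum_k entry B (flip x k) z.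
Proof.
rewrite entry_mul -(sum_adj (fun y => entry B y z)); apply: eq_bigr => y _.
by rewrite entry_adj adjC; case: adj; rewrite ?mul1r ?mul0r.
Qed.

Definition ew B x k := entry B x (flip x k).
Definition supp B := forall x y, ~~ adj x y -> entry B x y = 0.
Definition asym B := forall x y, entry B y x = - entry B x y.

Lemma sum_at2 B x p q : supp B -> p != q ->
  \sum_k entry B x (flip (flip (flip x p) q) k) = ew B x p + ew B x q /\
  \sum_k entry B (flip x k) (flip (flip x p) q) = ew B (flip x p) q + ew B (flip x q) p.
Proof.
move=> sB pq; split.
  rewrite (bigD1 p) // (bigD1 q) 1?eq_sym //= big1 ?addr0.
    by rewrite flipK flipC flipK addrC.
  move=> k /andP [kp kq]; apply: sB; apply: nadj3 => //; rewrite eq_sym //.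
rewrite (bigD1 p) // (bigD1 q) 1?eq_sym //= big1 ?addr0.
  by rewrite /ew flipC.
move=> k /andP [kp kq]; apply: sB; rewrite adj_flipl.
apply: nadj3 => //; rewrite eq_sym //.
Qed.

Lemma comm_VE B : supp B -> asym B ->
  (B *m adjA R D = adjA R D *m B) <->
  ((forall x, \sum_k ew B x k = 0) /\
   (forall x p q, p != q -> ew B x p + ew B x q = ew B (flip x p) q + ew B (flip x q) p)).
Proof.
move=> sB aB; split.
  move=> H.
  have Hs x z : \sum_k entry B x (flip z k) = \sum_k entry B (flip x k) z.
    by rewrite -BA_entry -AB_entry H.
  split.
    move=> x; have := Hs x x.
    have -> : \sum_k entry B (flip x k) x = - \sum_k ew B x k.
      by rewrite -sumrN; apply: eq_bigr => k _; rewrite aB.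
    rewrite /ew => /eqP; rewrite -subr_eq0 opprK -mulr2n.
    by rewrite mulrn_eq0 /= => /eqP.
  move=> x p q pq; have := Hs x (flip (flip x p) q).
  by have [-> ->] := sum_at2 x sB pq.
move=> [HV HE]; apply: mx_ext => x z; rewrite BA_entry AB_entry.
case: (pickP (fun k => adj x (flip z k))) => [k0 Hk0 | Hn]; last first.
  rewrite !big1 // => k _; apply: sB; rewrite ?adj_flipl; exact: negbT (Hn k).
have [m Hm] := adjP Hk0.
have -> : z = flip (flip x m) k0 by rewrite -Hm flipK.
have [-> | mk] := eqVneq m k0.
  rewrite flipK.
  have -> : \sum_k entry B (flip x k) x = - \sum_k ew B x k.
    by rewrite -sumrN; apply: eq_bigr => k _; rewrite aB.
  by rewrite HV oppr0.
by have [-> ->] := sum_at2 x sB mk; apply: HE.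
Qed.

End Mx.


Section G.
Variable R : realFieldType.
Variable D : nat.
Implicit Types (x y z : vert D) (i j k : 'I_D) (B C : mxX R D).

Lemma entry_alpha_l i B x z :
  entry (alphaS R i *m B) x z = sg R (x i) * entry B x z.
Proof.
rewrite entry_mul (bigD1 x) //= entry_alpha eqxx big1 ?addr0 // => w wx.
by rewrite entry_alpha eq_sym (negPf wx) mul0r.
Qed.

Lemma entry_alpha_r i B x z :
  entry (B *m alphaS R i) x z = entry B x z * sg R (z i).
Proof.
rewrite entry_mul (bigD1 z) //= entry_alpha eqxx big1 ?addr0 // => w wz.
by rewrite entry_alpha (negPf wz) mulr0.
Qed.

Lemma entryG i j x y : entry (genM R i j) x y =
  if adj x y then sg R (x i) * sg R (y j) - sg R (x j) * sg R (y i) else 0.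
Proof.
rewrite /genM entryB !entry_alpha_r !entry_alpha_l entry_adj.
by case: adj; rewrite ?mulr1 ?mulr0 ?mul0r ?subrr.
Qed.

Lemma sg_flip y k t : sg R (flip y k t) = if t == k then - sg R (y t) else sg R (y t).
Proof. by rewrite flipE; case: (t == k); case: (y t); rewrite /sg ?opprK. Qed.

Lemma sgx0 t : sg R (x0 D t) = 1.
Proof. by rewrite ffunE. Qed.

Lemma ewG i j x k :
  ew (genM R i j) x k = sg R (x i) * sg R (flip x k j) - sg R (x j) * sg R (flip x k i).
Proof. by rewrite /ew entryG adj_flip. Qed.

Lemma suppG i j : supp (genM R i j).
Proof. by move=> x y /negPf H; rewrite entryG H. Qed.

Lemma asymG i j : asym (genM R i j).
Proof.
move=> x y; rewrite !entryG adjC; case: adj; last by rewrite oppr0.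
by rewrite opprB mulrC [sg R (y j) * _]mulrC.
Qed.

Lemma antisymG i j : antisym (genM R i j).
Proof. by apply: mx_ext => x y; rewrite entry_tr entryN asymG. Qed.

Lemma VG i j x : i != j -> \sum_k ew (genM R i j) x k = 0.
Proof.
move=> ij; have ji : j != i by rewrite eq_sym.
rewrite (bigD1 i) // (bigD1 j) //= big1 ?addr0.
  by rewrite !ewG !sg_flip !eqxx (negPf ij) (negPf ji); ring.
move=> k /andP [ki kj]; rewrite ewG !sg_flip [i == k]eq_sym [j == k]eq_sym (negPf ki) (negPf kj).
by rewrite mulrC subrr.
Qed.

Lemma EG i j x p q : i != j -> p != q ->
  ew (genM R i j) x p + ew (genM R i j) x q =
  ew (genM R i j) (flip x p) q + ew (genM R i j) (flip x q) p.
Proof.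
move=> ij pq; rewrite !ewG !sg_flip.
have c1 : ~~ ((i == p) && (i == q)).
  by apply/negP => /andP [/eqP E1 /eqP E2]; rewrite -E1 -E2 eqxx in pq.
have c2 : ~~ ((j == p) && (j == q)).
  by apply/negP => /andP [/eqP E1 /eqP E2]; rewrite -E1 -E2 eqxx in pq.
have c3 : ~~ ((i == p) && (j == p)).
  by apply/negP => /andP [/eqP E1 /eqP E2]; rewrite E1 E2 eqxx in ij.
have c4 : ~~ ((i == q) && (j == q)).
  by apply/negP => /andP [/eqP E1 /eqP E2]; rewrite E1 E2 eqxx in ij.
move: c1 c2 c3 c4.
case: (i == p); case: (i == q); case: (j == p); case: (j == q) => //= _ _ _ _;
  ring.
Qed.

Lemma A_likeG i j : i != j -> A_like (genM R i j).
Proof.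
move=> ij; split; last by move=> x y _; apply: suppG.
apply/(comm_VE (suppG i j) (asymG i j)); split.
  by move=> x; apply: VG.
by move=> x p q pq; apply: EG.
Qed.

Definition Psi (q : 'I_D * 'I_D) B :=
  ew B (x0 D) q.1 - ew B (flip (x0 D) q.2) q.1.

Lemma PsiG (a b k j : 'I_D) : (a < b)%N -> (k < j)%N ->
  Psi (k, j) (genM R a b) = if (a == k) && (b == j) then 4 else 0.
Proof.
move=> ab kj; rewrite /Psi /= !ewG !sg_flip !sgx0.
have c1 : ~~ ((a == k) && (a == j)).
  by apply/negP => /andP [/eqP E1 /eqP E2]; subst; lia.
have c2 : ~~ ((b == k) && (b == j)).
  by apply/negP => /andP [/eqP E1 /eqP E2]; subst; lia.
have c3 : ~~ ((a == k) && (b == k)).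
  by apply/negP => /andP [/eqP E1 /eqP E2]; subst; lia.
have c4 : ~~ ((a == j) && (b == j)).
  by apply/negP => /andP [/eqP E1 /eqP E2]; subst; lia.
have c5 : ~~ ((a == j) && (b == k)).
  by apply/negP => /andP [/eqP E1 /eqP E2]; subst; lia.
move: c1 c2 c3 c4 c5.
case: (a == k); case: (a == j); case: (b == k); case: (b == j) => //= _ _ _ _ _;
  ring.
Qed.

End G.


Section Uniq.
Variable R : realFieldType.
Variable D : nat.
Implicit Types (x y z : vert D) (i j k : 'I_D).

Definition weight x := #|[set t | x t]|.

Lemma wtF x k : ~~ x k -> weight (flip x k) = (weight x).+1.
Proof.
move=> xk; rewrite /weight (cardsD1 k) inE flipE eqxx xk add1n; congr _.+1.
apply: eq_card => t; rewrite !inE flipE; case: (t =P k) => [->|_] //=.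
by rewrite (negPf xk).
Qed.

Lemma wtT x k : x k -> weight x = (weight (flip x k)).+1.
Proof.
move=> xk; rewrite -(wtF (x := flip x k) (k := k)) ?flipK //; by rewrite flipE eqxx xk.
Qed.

Variable v : vert D -> 'I_D -> R.
Hypothesis hA : forall x k, v (flip x k) k = - v x k.
Hypothesis hV : forall x, \sum_k v x k = 0.
Hypothesis hE : forall x p q, p != q ->
  v x p + v x q = v (flip x p) q + v (flip x q) p.
Hypothesis hN : forall j k, j != k -> v (x0 D) k = v (flip (x0 D) j) k.

Lemma v0 k : v (x0 D) k = 0.
Proof.
have h1 := hV (x0 D); have h2 := hV (flip (x0 D) k).
rewrite (bigD1 k) //= in h1; rewrite (bigD1 k) //= hA in h2.
have : \sum_(i | i != k) v (flip (x0 D) k) i = \sum_(i | i != k) v (x0 D) i.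
  by apply: eq_bigr => i ik; rewrite -hN // eq_sym.
move=> h3; rewrite h3 in h2; lra.
Qed.

Lemma unique_v x k : v x k = 0.
Proof.
have main : forall n x, weight x = n -> forall k, v x k = 0.
  elim/ltn_ind => n IH {}x wx {}k.
  case xk: (x k).
    have := hA (flip x k) k; rewrite flipK => ->.
    rewrite (IH (weight (flip x k))) ?oppr0 //.
    by rewrite -wx (wtT xk).
  have step : forall x' i' k', weight x' = n -> x' i' -> ~~ x' k' ->
      v x' k' = - v (flip (flip x' i') k') i'.
    move=> x' i' k' wx' xi' xk'.
    have ik : i' != k' by apply/eqP => E; move: xk'; rewrite -E xi'.
    have wy : (weight (flip x' i') < n)%N by rewrite -wx' (wtT xi').
    have := hE (flip x' i') ik; rewrite flipK.
    rewrite !(IH _ wy (flip x' i')) //.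
    move=> H; lra.
  have [n0 | n1 | n2] : [\/ n = 0%N, n = 1%N | (2 <= n)%N] by
    case: n {IH step wx} => [|[|n]]; [apply: Or31 | apply: Or32 | apply: Or33].
  - have -> : x = x0 D.
      apply/ffunP => t; have : t \notin [set t | x t].
        by rewrite (cards0_eq (etrans wx n0)) inE.
      by rewrite inE ffunE; case: (x t).
    exact: v0.
  - have /cards1P [j Hj] : #|[set t | x t]| == 1%N by rewrite -/(weight x) wx n1.
    have Ht t : x t = (t == j).
      by have := congr1 (fun S : {set 'I_D} => t \in S) Hj; rewrite /= !inE.
    have -> : x = flip (x0 D) j.
      by apply/ffunP => t; rewrite Ht flipE ffunE; case: (t == j).
    have jk : j != k by apply/eqP => E; rewrite Ht E eqxx in xk.
    rewrite -hN //; exact: v0.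
  - have [i iS] : exists i, i \in [set t | x t].
      by apply/card_gt0P; rewrite -/(weight x) wx; lia.
    have [j jS] : exists j, j \in [set t | x t] :\ i.
      apply/card_gt0P; move: (cardsD1 i [set t | x t]).
      rewrite iS -/(weight x) wx; lia.
    rewrite !inE in iS jS; case/andP: jS => ji xj.
    have xkf : ~~ x k by rewrite xk.
    have e1 := step x i k wx iS xkf.
    have e3 := step x j k wx xj xkf.
    set z := flip (flip x i) k.
    have ik : i != k by apply/eqP => E; rewrite E xk in iS.
    have jk : j != k by apply/eqP => E; rewrite E xk in xj.
    have wz : weight z = n.
      rewrite /z wtF; last by rewrite flipE eq_sym (negPf ik) xk.
      by rewrite -wx (wtT iS).
    have zj : z j by rewrite /z !flipE (negPf jk) (negPf ji).
    have zi : ~~ z i by rewrite /z !flipE (negPf ik) eqxx iS.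
    have e2 := step z j i wz zj zi.
    have Hu : flip (flip z j) i = flip (flip x j) k.
      rewrite /z flipC [flip (flip x i) k]flipC flipK flipC //.
    rewrite Hu in e2; rewrite e1 e2 in e3 *; lra.
by apply: main.
Qed.

End Uniq.


Section Pairs.
Variable D : nat.

Lemma mem_pairs (p : 'I_D * 'I_D) : (p \in pairs_lt D) = (p.1 < p.2)%N.
Proof.
rewrite /pairs_lt mem_filter; case: p => i j /=.
have -> : (i, j) \in [seq (i, j) : 'I_D * 'I_D | i <- enum 'I_D, j <- enum 'I_D].
  by apply: (allpairs_f (fun i j => (i, j))); rewrite mem_enum.
by rewrite andbT.
Qed.

Lemma uniq_pairs : uniq (pairs_lt D).
Proof.
apply: filter_uniq; apply: allpairs_uniq; rewrite ?enum_uniq //.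
by move=> [a b] [c d] _ _ /= [-> ->].
Qed.

Lemma size_pairs : size (pairs_lt D) = 'C(D, 2).
Proof.
rewrite size_filter -sum1_count big_mkcond big_allpairs /=.
rewrite (eq_bigr (fun i : 'I_D => \sum_(j < D) (if (i < j)%N then 1 else 0)%N)); last first.
  by move=> i _; rewrite big_enum.
rewrite big_enum /= exchange_big /=.
rewrite (eq_bigr (fun j : 'I_D => nat_of_ord j)); last first.
  move=> j _; rewrite -big_mkcond /=.
  rewrite -(big_ord_widen (n1 := j) D (fun _ => 1%N)) ?(ltnW (ltn_ord j)) //.
  by rewrite sum1_card card_ord.
by rewrite -(big_mkord xpredT (fun j => j)) bin2_sum.
Qed.

End Pairs.


Section Main.
Variable R : realFieldType.
Variable D : nat.
Implicit Types (x y z : vert D) (i j k : 'I_D) (B C : mxX R D).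

Lemma asym_of B : antisym B -> asym B.
Proof. by move=> aB x y; rewrite -entry_tr aB entryN. Qed.

Lemma supp_of B : antisym B -> A_like B -> supp B.
Proof.
move=> aB [_ sB] x y nxy; have [E | ne] := eqVneq x y; last exact: sB.
subst; have := asym_of aB y y; lra.
Qed.

Lemma entry0 x y : entry (0 : mxX R D) x y = 0.
Proof. by rewrite /entry mxE. Qed.

Lemma entryV B (r : seq ('I_D * 'I_D)) (c : 'I_D * 'I_D -> R) x y :
  entry (B - \sum_(p <- r) c p *: genM R p.1 p.2) x y =
  entry B x y - \sum_(p <- r) c p * entry (genM R p.1 p.2) x y.
Proof.
by rewrite entryB entry_sum; congr (_ - _); apply: eq_bigr => p _; rewrite entryZ.
Qed.

Lemma PsiV B (r : seq ('I_D * 'I_D)) (c : 'I_D * 'I_D -> R) q :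
  Psi q (B - \sum_(p <- r) c p *: genM R p.1 p.2) =
  Psi q B - \sum_(p <- r) c p * Psi q (genM R p.1 p.2).
Proof.
rewrite /Psi /ew !entryV.
under [X in _ = _ - X]eq_bigr do rewrite mulrBr.
rewrite sumrB; ring.
Qed.

Lemma sum_PsiG (c : 'I_D * 'I_D -> R) (k j : 'I_D) : (k < j)%N ->
  \sum_(p <- pairs_lt D) c p * Psi (k, j) (genM R p.1 p.2) = c (k, j) * 4.
Proof.
move=> kj; rewrite (bigD1_seq (k, j)) ?mem_pairs ?uniq_pairs //= PsiG // !eqxx /=.
rewrite big1_seq ?addr0 // => -[a b] /andP [ne]; rewrite mem_pairs /= => ab.
by rewrite PsiG // -xpair_eqE (negPf ne) mulr0.
Qed.

Lemma Psi_sum (I : Type) (r : seq I) (a : I -> R) (F : I -> mxX R D) q :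
  Psi q (\sum_(l <- r) a l *: F l) = \sum_(l <- r) a l * Psi q (F l).
Proof.
rewrite /Psi /ew !entry_sum -sumrB; apply: eq_bigr => l _.
by rewrite !entryZ mulrBr.
Qed.

Lemma span_mem B : antisym B -> A_like B -> B \in <<genList R D>>%VS.
Proof.
move=> aB lB.
pose c := fun p : 'I_D * 'I_D => Psi p B / 4.
pose C := \sum_(p <- pairs_lt D) c p *: genM R p.1 p.2.
pose V := B - C.
have asV : asym V.
  move=> x y; rewrite /V /C !entryV (asym_of aB).
  under eq_bigr => p _ do rewrite asymG mulrN.
  by rewrite sumrN; ring.
have spV : supp V.
  move=> x y nxy; rewrite /V /C entryV (supp_of aB lB) // big1 ?subr0 // => p _.
  by rewrite suppG // mulr0.
have cV : V *m adjA R D = adjA R D *m V.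
  rewrite /V /C mulmxBl mulmxBr lB.1 mulmx_suml mulmx_sumr; congr (_ - _).
  apply: eq_bigr => p _; rewrite -scalemxAl -scalemxAr.
  have [E | ne] := eqVneq p.1 p.2.
    by rewrite /genM E subrr mul0mx mulmx0.
  by rewrite (A_likeG R ne).1.
have [HV HE] := (comm_VE spV asV).1 cV.
have hA : forall x k, ew V (flip x k) k = - ew V x k.
  by move=> x k; rewrite /ew flipK; apply: asV.
have PsiV0 : forall k j : 'I_D, (k < j)%N -> Psi (k, j) V = 0.
  move=> k j kj; rewrite /V /C PsiV sum_PsiG // /c divfK ?subrr //.
  by rewrite pnatr_eq0.
have hN : forall j k : 'I_D, j != k -> ew V (x0 D) k = ew V (flip (x0 D) j) k.
  move=> j k jk; case: (ltngtP k j) => [kj | jk' | E].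
  - by have := PsiV0 k j kj; rewrite /Psi /= => H; lra.
  - have := PsiV0 j k jk'; rewrite /Psi /= => H.
    by have := HE (x0 D) j k jk; lra.
  - by move/val_inj: E => E; rewrite E eqxx in jk.
have Hv := unique_v (v := ew V) hA HV HE hN.
have V0 : V = 0.
  apply: mx_ext => x y; rewrite entry0.
  have [/adjP [k ->] | nadj] := boolP (adj x y); first exact: Hv.
  exact: spV.
have -> : B = C by apply/eqP; rewrite -subr_eq0 -/V V0.
rewrite /C big_seq; apply: memv_suml => p pP; apply: memvZ; apply: memv_span.
exact: (map_f (fun p : 'I_D * 'I_D => genM R p.1 p.2)).
Qed.

End Main.

Unset Implicit Arguments.

Theorem theorem9p7 (R : realFieldType) (D : nat) (hD : (1 <= D)%N) :
  [/\ (forall B, B \in genList R D -> antisym B /\ A_like B),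
      free (genList R D),
      (forall B : mxX R D, antisym B -> A_like B -> B \in <<genList R D>>%VS)
    & size (genList R D) = 'C(D, 2)].
Proof.
have PG : forall p q : 'I_D * 'I_D, p \in pairs_lt D -> q \in pairs_lt D ->
    Psi q (genM R p.1 p.2) = if p == q then 4 else 0.
  move=> [a b] [k j]; rewrite !mem_pairs /= => ab kj.
  by rewrite PsiG // xpair_eqE.
split.
- move=> B /mapP [p pP ->]; rewrite mem_pairs in pP.
  have ne : p.1 != p.2 by rewrite neq_ltn pP.
  by split; [exact: antisymG | exact: A_likeG].
- suff : free (in_tuple (genList R D)) by [].
  apply/freeP => k Hk i.
  pose o : 'I_D := Ordinal hD.
  pose q := nth (o, o) (pairs_lt D) i.
  have iP : (i < size (pairs_lt D))%N.
    by rewrite -(size_map (fun p : 'I_D * 'I_D => genM R p.1 p.2)); exact: ltn_ord i.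
  have qP : q \in pairs_lt D by apply: mem_nth.
  have := congr1 (Psi q) Hk.
  rewrite /Psi /ew !entry0 subrr -/(Psi q _) Psi_sum.
  rewrite (eq_bigr (fun l => if l == i then k i * 4 else 0)); last first.
    move=> l _.
    have lP : (l < size (pairs_lt D))%N.
      by rewrite -(size_map (fun p : 'I_D * 'I_D => genM R p.1 p.2)); exact: ltn_ord l.
    rewrite /= (nth_map (o, o)) // PG ?mem_nth //.
    have [-> | ne] := eqVneq l i; first by rewrite eqxx.
    have ne' : nat_of_ord l != nat_of_ord i by [].
    by rewrite nth_uniq ?uniq_pairs // (negPf ne') mulr0.
  rewrite -big_mkcond big_pred1_eq => H; lra.
- exact: span_mem.
- by rewrite size_map size_pairs.
Qed.
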